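(* Let $R$ be a unique factorization domain. Let $1\leqslant n\leqslant m$, let $s_1,\dots,s_n\in\operatorname{Sqf} R$ with $s_i\mid s_{i+1}$ for $i=1,\dots,n-1$, and let $t_1,\dots,t_m\in\operatorname{Sqf} R$ with $t_i\mid t_{i+1}$ for $i=1,\dots,m-1$. If $s_1s_2\cdots s_n=t_1t_2\cdots t_m$, then $s_i\sim t_{i+m-n}$ for $i=1,\dots,n$, and, if $m>n$, then $t_i\in R^{\ast}$ for $i=1,\dots,m-n$.
   Context: $R^{\ast}$ denotes the set of invertible elements of $R$; $a\sim b$ means $a$ and $b$ are associated; $a\mid b$ means $a$ divides $b$. An element $a\in R$ is square-free if it cannot be written as $a=b^2c$ with $b\in R\setminus R^{\ast}$ and $c\in R$; $\operatorname{Sqf} R$ denotes the set of square-free elements of $R$. *)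

(* Defs.v *)
From mathcomp Require Import all_boot all_order all_algebra.
Set Implicit Arguments. Unset Strict Implicit. Unset Printing Implicit Defensive.
Import GRing.Theory.
Local Open Scope ring_scope.

Definition dvdR (R : comRingType) (a b : R) : Prop := exists c : R, b = a * c.

Definition assocR (R : comUnitRingType) (a b : R) : Prop :=
  exists u : R, u \is a GRing.unit /\ a = u * b.

Definition irredR (R : comUnitRingType) (p : R) : Prop :=
  p != 0 /\ p \isn't a GRing.unit /\
  forall a b : R, p = a * b -> a \is a GRing.unit \/ b \is a GRing.unit.

Definition UFD (R : idomainType) : Prop :=
  (forall a : R, a != 0 -> a \isn't a GRing.unit ->
     exists f : seq R, (forall p, p \in f -> irredR p) /\ a = \prod_(p <- f) p)
  /\
  (forall f g : seq R,
     (forall p, p \in f -> irredR p) -> (forall p, p \in g -> irredR p) ->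
     \prod_(p <- f) p = \prod_(p <- g) p ->
     exists g' : seq R, perm_eq g g' /\ size f = size g' /\
       forall i, (i < size f)%N -> assocR (nth 0 f i) (nth 0 g' i)).

Definition sqfree (R : comUnitRingType) (a : R) : Prop :=
  ~ exists b c : R, b \isn't a GRing.unit /\ a = b ^+ 2 * c.

(* Main.v *)
Require Import Defs.
From mathcomp Require Import all_boot all_order all_algebra.
From mathcomp Require Import ring zify.
From Stdlib Require Import ClassicalEpsilon.
Import GRing.Theory.
Set Implicit Arguments. Unset Strict Implicit.
Local Open Scope ring_scope.

Lemma dvdR_refl (R : comRingType) (a : R) : dvdR a a.
Proof. by exists 1; rewrite mulr1. Qed.
Lemma dvdR_trans (R : comRingType) (a b c : R) : dvdR a b -> dvdR b c -> dvdR a c.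
Proof. by move=> [x ->] [y ->]; exists (x * y); rewrite mulrA. Qed.
Lemma dvdR_mulr (R : comRingType) (a b c : R) : dvdR a b -> dvdR a (b * c).
Proof. by move=> [x ->]; exists (x * c); rewrite mulrA. Qed.
Lemma dvdR_mull (R : comRingType) (a b c : R) : dvdR a b -> dvdR a (c * b).
Proof. by move=> H; rewrite mulrC; apply: dvdR_mulr. Qed.
Lemma dvdR0 (R : comRingType) (a : R) : dvdR a 0.
Proof. by exists 0; rewrite mulr0. Qed.

Lemma unit_dvd (R : comUnitRingType) (a b : R) :
  b \is a GRing.unit -> dvdR a b -> a \is a GRing.unit.
Proof. by move=> Hb [c Ec]; move: Hb; rewrite Ec unitrM => /andP[]. Qed.

Lemma unit_neq0 (R : comUnitRingType) (u : R) : u \is a GRing.unit -> u != 0.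
Proof. by move=> Hu; apply/eqP => u0; rewrite u0 unitr0 in Hu. Qed.

Lemma irredR_mulu (R : idomainType) (u p : R) :
  u \is a GRing.unit -> irredR p -> irredR (u * p).
Proof.
move=> Hu [p0 [pu Hp]]; split; first by rewrite mulf_neq0 // unit_neq0.
split; first by rewrite unitrM Hu.
move=> a b E.
have : p = (u^-1 * a) * b by rewrite -mulrA -E mulKr.
case/Hp => H; last by right.
by left; rewrite -(mulVKr Hu a) unitrM Hu.
Qed.

Lemma dvd_big (R : comRingType) (I : eqType) (r : seq I) (F : I -> R) i :
  i \in r -> dvdR (F i) (\prod_(k <- r) F k).
Proof. by move=> ir; rewrite (big_rem i ir) /=; exists (\prod_(k <- rem i r) F k). Qed.

Lemma fact_exists (R : idomainType) (HR : UFD R) (a : R) : a != 0 ->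
  exists u f, [/\ u \is a GRing.unit, (forall x, x \in f -> irredR x)
                & a = u * \prod_(x <- f) x].
Proof.
move=> a0; case: (boolP (a \is a GRing.unit)) => au.
  by exists a, [::]; rewrite big_nil mulr1.
have [f [Hf ->]] := HR.1 a a0 au.
by exists 1, f; rewrite mul1r unitr1.
Qed.

Lemma ufd_mem (R : idomainType) (HR : UFD R) (f g : seq R) :
  (forall p, p \in f -> irredR p) -> (forall p, p \in g -> irredR p) ->
  \prod_(p <- f) p = \prod_(p <- g) p ->
  forall y, y \in g -> exists2 x, x \in f & assocR x y.
Proof.
move=> Hf Hg E y yg.
have [g' [pg [sz Ha]]] := HR.2 f g Hf Hg E.
have yg' : y \in g' by rewrite -(perm_mem pg).
exists (nth 0 f (index y g')).
  by rewrite mem_nth // sz index_mem.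
by rewrite -{2}(nth_index 0 yg'); apply: Ha; rewrite sz index_mem.
Qed.

Lemma irred_prime (R : idomainType) (HR : UFD R) (p a b : R) :
  irredR p -> dvdR p (a * b) -> dvdR p a \/ dvdR p b.
Proof.
move=> Hp [c Ec].
have [-> | a0] := eqVneq a 0; first by left; exact: dvdR0.
have [-> | b0] := eqVneq b 0; first by right; exact: dvdR0.
have c0 : c != 0.
  by apply: contraNneq (mulf_neq0 a0 b0) => c0; rewrite Ec c0 mulr0.
have [ua [fa [Hua Hfa Ea]]] := fact_exists HR a0.
have [ub [fb [Hub Hfb Eb]]] := fact_exists HR b0.
have [uc [fc [Huc Hfc Ecc]]] := fact_exists HR c0.
set w := ua * ub * uc^-1.
have Hw : w \is a GRing.unit by rewrite !unitrM unitrV Hua Hub Huc.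
have E2 : w * \prod_(x <- fa ++ fb) x = \prod_(x <- p :: fc) x.
  apply: (mulrI Huc); rewrite big_cat big_cons /=.
  have -> : uc * (w * ((\prod_(x <- fa) x) * (\prod_(x <- fb) x)))
     = (uc * uc^-1) * ((ua * \prod_(x <- fa) x) * (ub * \prod_(x <- fb) x)).
    by rewrite /w; ring.
  by rewrite mulrV // mul1r -Ea -Eb Ec mulrCA Ecc.
have Hpn : ~~ (p \is a GRing.unit) by case: Hp => _ [].
have Hfab : forall x, x \in fa ++ fb -> irredR x.
  by move=> x; rewrite mem_cat => /orP[/Hfa|/Hfb].
suff [z zin pz] : exists2 z, z \in fa ++ fb & dvdR p z.
  move: zin; rewrite mem_cat => /orP[] zin.
    by left; rewrite Ea; apply: dvdR_mull; apply: dvdR_trans pz (dvd_big id zin).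
  by right; rewrite Eb; apply: dvdR_mull; apply: dvdR_trans pz (dvd_big id zin).
move: Hfab E2; case: (fa ++ fb) => [|x r] Hfab E2.
  move: Hw; rewrite big_nil mulr1 in E2; rewrite E2 big_cons unitrM.
  by rewrite (negbTE Hpn).
have Hf' : forall y, y \in (w * x) :: r -> irredR y.
  move=> y; rewrite in_cons => /orP[/eqP ->|yr].
    by apply: irredR_mulu => //; apply: Hfab; rewrite mem_head.
  by apply: Hfab; rewrite in_cons yr orbT.
have Hg : forall y, y \in p :: fc -> irredR y.
  by move=> y; rewrite in_cons => /orP[/eqP ->|/Hfc].
have E3 : \prod_(y <- w * x :: r) y = \prod_(y <- p :: fc) y.
  by rewrite -E2 !big_cons mulrA.
have [z zin [v [Hv Ez]]] := ufd_mem HR Hf' Hg E3 (mem_head _ _).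
move: zin; rewrite in_cons => /orP[/eqP zE|zr].
  exists x; first by rewrite mem_head.
  exists (w^-1 * v); rewrite mulrC -mulrA -Ez zE mulKr //.
by exists z; [rewrite in_cons zr orbT | exists v; rewrite Ez mulrC].
Qed.

Lemma prime_big (R : idomainType) (HR : UFD R) (p : R) (I : eqType) (r : seq I)
  (F : I -> R) :
  irredR p -> dvdR p (\prod_(k <- r) F k) -> exists2 k, k \in r & dvdR p (F k).
Proof.
move=> Hp; elim: r => [|x r IH].
  rewrite big_nil => H; have := unit_dvd (unitr1 _) H.
  by case: Hp => _ [/negP].
rewrite big_cons => /(irred_prime HR Hp) [H|/IH [k kr H]].
  by exists x; rewrite ?mem_head.
by exists k; rewrite // in_cons kr orbT.
Qed.

Lemma fact_dvd (R : idomainType) (HR : UFD R) (f : seq R) :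
  (forall x, x \in f -> irredR x) -> forall (u d S : R), u \is a GRing.unit ->
  u * \prod_(x <- f) x = d * S ->
  exists u' f', [/\ u' \is a GRing.unit, (forall x, x \in f' -> irredR x),
     S = u' * \prod_(x <- f') x & (size f' <= size f)%N].
Proof.
elim: f => [|x r IH] Hf u d S Hu E.
  exists S, [::]; rewrite big_nil mulr1; split => //.
  by move: Hu; rewrite big_nil mulr1 in E; rewrite E unitrM => /andP[].
have Hx : irredR x by apply: Hf; rewrite mem_head.
have Hr : forall y, y \in r -> irredR y.
  by move=> y yr; apply: Hf; rewrite in_cons yr orbT.
have x0 : x != 0 by case: Hx.
rewrite big_cons in E.
have : dvdR x (d * S) by rewrite -E; exists (u * \prod_(y <- r) y); rewrite mulrCA.
case/(irred_prime HR Hx) => [[d1 Ed] | [S1 ES]].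
  have E' : u * \prod_(y <- r) y = d1 * S.
    by apply: (mulfI x0); rewrite mulrCA E Ed mulrA.
  have [u' [f' [Hu' Hf' ES Hs]]] := IH Hr u d1 S Hu E'.
  by exists u', f'; split => //; apply: leqW.
have E' : u * \prod_(y <- r) y = d * S1.
  by apply: (mulfI x0); rewrite mulrCA E ES mulrCA.
have [u' [f' [Hu' Hf' ES1 Hs]]] := IH Hr u d S1 Hu E'.
exists u', (x :: f'); split => //.
- by move=> y; rewrite in_cons => /orP[/eqP ->|/Hf'].
- by rewrite ES ES1 big_cons mulrCA.
Qed.

Definition dv (R : comRingType) (p a : R) : bool :=
  if excluded_middle_informative (dvdR p a) then true else false.

Lemma dvP (R : comRingType) (p a : R) : reflect (dvdR p a) (dv p a).
Proof. by rewrite /dv; case: excluded_middle_informative => H; constructor. Qed.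

Definition quo (R : comRingType) (p a : R) : R :=
  match excluded_middle_informative (dvdR p a) with
  | left H => proj1_sig (constructive_indefinite_description _ H)
  | right _ => a end.

Lemma quoE (R : comRingType) (p a : R) : a = (if dv p a then p else 1) * quo p a.
Proof.
rewrite /dv /quo; case: excluded_middle_informative => H; last by rewrite mul1r.
by case: constructive_indefinite_description.
Qed.

Lemma quo_dvd (R : comRingType) (p a : R) : dvdR (quo p a) a.
Proof. by exists (if dv p a then p else 1); rewrite mulrC -quoE. Qed.

Lemma sqfree_dvd (R : comUnitRingType) (d a : R) : dvdR d a -> sqfree a -> sqfree d.
Proof.
move=> [e Ee] Ha [b [c [Hb Ed]]]; apply: Ha; exists b, (c * e).
by rewrite Ee Ed mulrA.
Qed.

Lemma quo_ndvd (R : comUnitRingType) (p a : R) :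
  irredR p -> sqfree a -> ~ dvdR p (quo p a).
Proof.
move=> [_ [Hp _]] Ha [c Ec]; have Ea := quoE p a.
case: (dvP p a) Ea => H Ea.
  by apply: Ha; exists p, c; split => //; rewrite Ea Ec mulrA expr2.
by apply: H; rewrite Ea mul1r; exists c.
Qed.

Lemma quo_chain (R : idomainType) (HR : UFD R) (p a b : R) :
  irredR p -> dvdR a b -> dvdR (quo p a) (quo p b).
Proof.
move=> Hp [c Ec]; have p0 : p != 0 by case: Hp.
have Ea := quoE p a; have Eb := quoE p b.
case: (dvP p a) Ea => Ha Ea; case: (dvP p b) Eb => Hb Eb.
- by exists c; apply: (mulfI p0); rewrite -Eb Ec {1}Ea mulrA.
- by case: Hb; rewrite Ec; apply: dvdR_mulr.
- rewrite mul1r in Ea.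
  have : dvdR p (a * c) by rewrite -Ec.
  case/(irred_prime HR Hp) => // [[d Ed]].
  exists d; apply: (mulfI p0); rewrite -Eb Ec Ed -Ea; ring.
- by rewrite mul1r in Ea; rewrite mul1r in Eb; rewrite -Ea -Eb; exists c.
Qed.

Lemma mono_thr (D : nat -> bool) (n : nat) :
  (forall i i', (1 <= i)%N -> (i <= i')%N -> (i' <= n)%N -> D i -> D i') ->
  exists j, (1 <= j <= n.+1)%N /\ forall i, (1 <= i <= n)%N -> D i = (j <= i)%N.
Proof.
elim: n => [|n IH] Hm.
  by exists 1%N; split => // i; lia.
have [j [Hj HD]] := IH (fun i i' h1 h2 h3 => Hm i i' h1 h2 (leqW h3)).
case Dn: (D n.+1).
  exists j; split; first lia.
  move=> i Hi; have [ile | igt] := leqP i n; first by apply: HD; lia.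
  have -> : i = n.+1 by lia.
  by rewrite Dn; apply/esym; apply/idP; lia.
exists n.+2; split; first lia.
move=> i Hi; have -> : (n.+2 <= i)%N = false by apply/negbTE; lia.
apply/negbTE/negP => Di.
by move: (Hm i n.+1 ltac:(lia) ltac:(lia) (leqnn _) Di); rewrite Dn.
Qed.

Lemma prod_thr (R : comRingType) (p : R) (n j : nat) (D : nat -> bool) (s s' : nat -> R) :
  (1 <= j <= n.+1)%N -> (forall i, (1 <= i <= n)%N -> D i = (j <= i)%N) ->
  (forall i, s i = (if D i then p else 1) * s' i) ->
  \prod_(1 <= i < n.+1) s i = p ^+ (n.+1 - j) * \prod_(1 <= i < n.+1) s' i.
Proof.
move=> Hj HD Hs.
rewrite (eq_big_nat _ _ (F2 := fun i => (if (j <= i)%N then p else 1) * s' i)); last first.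
  by move=> i Hi; rewrite Hs HD.
rewrite big_split /=; congr (_ * _).
case/andP: Hj => j1 jn.
rewrite (big_cat_nat j1 jn) /= big_nat_cond big1 ?mul1r; last first.
  by move=> i /andP[/andP[_ ij] _]; rewrite leqNgt ij.
rewrite (eq_big_nat _ _ (F2 := fun => p)) ?prodr_const_nat //.
by move=> i /andP[-> _].
Qed.

Lemma chain_dvd (R : comRingType) (n : nat) (s : nat -> R) :
  (forall i, (1 <= i < n)%N -> dvdR (s i) (s i.+1)) ->
  forall i i', (1 <= i)%N -> (i <= i')%N -> (i' <= n)%N -> dvdR (s i) (s i').
Proof.
move=> Hd i; elim=> [|i' IH] i1 ii' i'n; first lia.
have [-> | ne] := eqVneq i i'.+1; first exact: dvdR_refl.
apply: dvdR_trans (IH i1 ltac:(lia) ltac:(lia)) (Hd i' ltac:(lia)).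
Qed.

Lemma exp_eq (R : idomainType) (p X Y : R) (a b : nat) :
  p != 0 -> (a <= b)%N -> p ^+ a * X = p ^+ b * Y -> ~ dvdR p X -> a = b /\ X = Y.
Proof.
move=> p0 ab E HX.
rewrite -(subnKC ab) exprD -mulrA in E.
have {E} E := mulfI (expf_neq0 a p0) E.
case Ec: (b - a)%N E => [|c] E.
  by split; [lia | rewrite E expr0 mul1r].
by exfalso; apply: HX; rewrite E exprS -mulrA; exists (p ^+ c * Y).
Qed.

Lemma unit_case (R : comUnitRingType) (n m : nat) (s t : nat -> R) : (n <= m)%N ->
  \prod_(1 <= i < n.+1) s i \is a GRing.unit ->
  \prod_(1 <= i < n.+1) s i = \prod_(1 <= i < m.+1) t i ->
  (forall i, (1 <= i <= n)%N -> assocR (s i) (t (i + m - n)%N)) /\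
  ((n < m)%N -> forall i, (1 <= i <= m - n)%N -> t i \is a GRing.unit).
Proof.
move=> nm Hu E.
have Ht : forall i, (1 <= i <= m)%N -> t i \is a GRing.unit.
  move=> i Hi; apply: (unit_dvd (b := \prod_(1 <= i < m.+1) t i)); first by rewrite -E.
  by apply: dvd_big; rewrite mem_index_iota ltnS.
split; last by move=> _ i Hi; apply: Ht; lia.
move=> i Hi.
have Hs : s i \is a GRing.unit.
  by apply: unit_dvd Hu (dvd_big s _); rewrite mem_index_iota ltnS.
have Hti : t (i + m - n)%N \is a GRing.unit by apply: Ht; lia.
exists (s i / t (i + m - n)%N); split; first by rewrite unitrM unitrV Hs Hti.
by rewrite divrK.
Qed.

Lemma main_ind (R : idomainType) (HR : UFD R) (n m : nat) : (1 <= n)%N -> (n <= m)%N ->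
  forall N (f : seq R) (u : R) (s t : nat -> R), (size f <= N)%N ->
  u \is a GRing.unit -> (forall x, x \in f -> irredR x) ->
  \prod_(1 <= i < n.+1) s i = u * \prod_(x <- f) x ->
  (forall i, (1 <= i <= n)%N -> sqfree (s i)) ->
  (forall i, (1 <= i < n)%N -> dvdR (s i) (s i.+1)) ->
  (forall i, (1 <= i <= m)%N -> sqfree (t i)) ->
  (forall i, (1 <= i < m)%N -> dvdR (t i) (t i.+1)) ->
  \prod_(1 <= i < n.+1) s i = \prod_(1 <= i < m.+1) t i ->
  (forall i, (1 <= i <= n)%N -> assocR (s i) (t (i + m - n)%N)) /\
  ((n < m)%N -> forall i, (1 <= i <= m - n)%N -> t i \is a GRing.unit).
Proof.
move=> n1 nm; elim=> [|N IH] [|p r] u s t Hsz Hu Hf EP Hs Hsd Ht Htd E //;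
  try by apply: unit_case => //; rewrite EP big_nil mulr1.
have Hp : irredR p by apply: Hf; rewrite mem_head.
have Hr : forall y, y \in r -> irredR y.
  by move=> y yr; apply: Hf; rewrite in_cons yr orbT.
have p0 : p != 0 by case: Hp.
rewrite big_cons in EP.
have pP : dvdR p (\prod_(1 <= i < n.+1) s i).
  by rewrite EP; exists (u * \prod_(y <- r) y); rewrite mulrCA.
have [i0 i0in pdi0] := prime_big HR Hp pP.
rewrite mem_index_iota ltnS in i0in.
have [j [Hj HDs]] : exists j, (1 <= j <= n.+1)%N /\
    forall i, (1 <= i <= n)%N -> dv p (s i) = (j <= i)%N.
  apply: mono_thr => i i' h1 h2 h3 /dvP H; apply/dvP.
  exact: dvdR_trans H (chain_dvd Hsd h1 h2 h3).
have [k [Hk HDt]] : exists k, (1 <= k <= m.+1)%N /\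
    forall i, (1 <= i <= m)%N -> dv p (t i) = (k <= i)%N.
  apply: mono_thr => i i' h1 h2 h3 /dvP H; apply/dvP.
  exact: dvdR_trans H (chain_dvd Htd h1 h2 h3).
set s' := fun i => quo p (s i).
set t' := fun i => quo p (t i).
have EPs := prod_thr (s' := s') Hj HDs (fun i => quoE p (s i)).
have EPt := prod_thr (s' := t') Hk HDt (fun i => quoE p (t i)).
have nds : ~ dvdR p (\prod_(1 <= i < n.+1) s' i).
  move=> /(prime_big HR Hp) [i]; rewrite mem_index_iota ltnS => Hi.
  by apply: quo_ndvd => //; apply: Hs.
have ndt : ~ dvdR p (\prod_(1 <= i < m.+1) t' i).
  move=> /(prime_big HR Hp) [i]; rewrite mem_index_iota ltnS => Hi.
  by apply: quo_ndvd => //; apply: Ht.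
have [ab ES] : (n.+1 - j = m.+1 - k)%N /\
    \prod_(1 <= i < n.+1) s' i = \prod_(1 <= i < m.+1) t' i.
  have E2 := E; rewrite EPs EPt in E2.
  have [le|lt] := leqP (n.+1 - j) (m.+1 - k).
    exact: exp_eq p0 le E2 nds.
  have [H1 H2] := exp_eq p0 (ltnW lt) (esym E2) ndt.
  by split.
have a1 : (1 <= n.+1 - j)%N.
  have := HDs i0 i0in; rewrite (introT (dvP _ _) pdi0) => /esym H; lia.
have E' : u * \prod_(y <- r) y = p ^+ (n.+1 - j).-1 * \prod_(1 <= i < n.+1) s' i.
  apply: (mulfI p0); rewrite mulrCA -EP EPs mulrA -exprS prednK //.
have [u' [f' [Hu' Hf' ES' Hs']]] := fact_dvd HR Hr Hu E'.
have Hsz' : (size f' <= N)%N by apply: leq_trans Hs' _; rewrite -ltnS.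
have [IHa IHb] := IH f' u' s' t' Hsz' Hu' Hf' ES'
  (fun i Hi => sqfree_dvd (quo_dvd p (s i)) (Hs i Hi))
  (fun i Hi => quo_chain HR Hp (Hsd i Hi))
  (fun i Hi => sqfree_dvd (quo_dvd p (t i)) (Ht i Hi))
  (fun i Hi => quo_chain HR Hp (Htd i Hi)) ES.
split.
  move=> i Hi; have [w [Hw Ew]] := IHa i Hi.
  exists w; split => //.
  rewrite (quoE p (s i)) (quoE p (t _)) HDs // HDt; last lia.
  have -> : (k <= i + m - n)%N = (j <= i)%N by apply/idP/idP; lia.
  by rewrite -/(s' i) -/(t' _) Ew mulrCA.
move=> nm' i Hi.
rewrite (quoE p (t i)) HDt; last lia.
have -> : (k <= i)%N = false by apply/negbTE; lia.
by rewrite mul1r; apply: IHb.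
Qed.

Theorem proposition2 (R : idomainType) (HR : UFD R) (n m : nat)
  (s t : nat -> R) :
  (1 <= n)%N -> (n <= m)%N ->
  (forall i, (1 <= i <= n)%N -> sqfree (s i)) ->
  (forall i, (1 <= i < n)%N -> dvdR (s i) (s i.+1)) ->
  (forall i, (1 <= i <= m)%N -> sqfree (t i)) ->
  (forall i, (1 <= i < m)%N -> dvdR (t i) (t i.+1)) ->
  \prod_(1 <= i < n.+1) s i = \prod_(1 <= i < m.+1) t i ->
  (forall i, (1 <= i <= n)%N -> assocR (s i) (t (i + m - n)%N)) /\
  ((n < m)%N -> forall i, (1 <= i <= m - n)%N -> t i \is a GRing.unit).
Proof.
move=> n1 nm Hs Hsd Ht Htd E.
have P0 : \prod_(1 <= i < n.+1) s i != 0.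
  rewrite prodf_seq_neq0; apply/allP => i; rewrite mem_index_iota ltnS => Hi /=.
  apply/eqP => si0; apply: (Hs i Hi); exists 0, 0; split; last by rewrite mulr0.
  by rewrite unitr0.
have [u [f [Hu Hf EP]]] := fact_exists HR P0.
exact: (main_ind HR n1 nm (leqnn _) Hu Hf EP Hs Hsd Ht Htd E).
Qed.
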